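(* For every integer $n>16$, the generalized Petersen graph $GP(n,3)$ is not $\ell$-distance-balanced for any integer $\ell$ with $3\le \ell<{\rm diam}(GP(n,3))$.
   Context: For a connected graph $G$ and $x,y\in V(G)$, $d_G(x,y)$ denotes the distance and ${\rm diam}(G)$ the diameter. Let $W_{xy}=\{w\in V(G): d_G(w,x)<d_G(w,y)\}$. $G$ is called $\ell$-distance-balanced if $|W_{xy}|=|W_{yx}|$ for every pair $x,y\in V(G)$ with $d_G(x,y)=\ell$. For integers $n\ge 3$ and $1\le k<n/2$, the generalized Petersen graph $GP(n,k)$ has vertex set $\{u_i: i\in\mathbb{Z}_n\}\cup\{v_i: i\in\mathbb{Z}_n\}$ and edge set $\{u_iu_{i+1}: i\in\mathbb{Z}_n\}\cup\{v_iv_{i+k}: i\in\mathbb{Z}_n\}\cup\{u_iv_i: i\in\mathbb{Z}_n\}$. *)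

(* Defs.v *)
From mathcomp Require Import all_boot.
Set Implicit Arguments. Unset Strict Implicit. Unset Printing Implicit Defensive.

Section Graphs.
Variable T : finType.
Variable e : rel T.

Fixpoint ball (k : nat) (x : T) : {set T} :=
  match k with
  | 0 => [set x]
  | k'.+1 => ball k' x :|: [set z | [exists y in ball k' x, e y z]]
  end.

(* graph distance: least d with y within distance d of x.
   (Any shortest walk has length < #|T|; unreachable pairs would get #|T|,
   irrelevant here as GP(n,k) is connected.) *)
Definition gdist (x y : T) : nat := find (fun d => y \in ball d x) (iota 0 #|T|).

Definition diam : nat := \max_(x : T) \max_(y : T) gdist x y.

Definition Wset (x y : T) : {set T} := [set w | gdist w x < gdist w y].

Definition dist_balanced (l : nat) : Prop :=
  forall x y : T, gdist x y = l -> #|Wset x y| = #|Wset y x|.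
End Graphs.

(* Generalized Petersen graph GP(n,k): u_i = inl i, v_i = inr i, indices mod n. *)
Definition GPV (n : nat) : finType := ('I_n + 'I_n)%type.

Definition GPadj (n k : nat) : rel (GPV n) :=
  fun a b =>
    match a, b with
    | inl i, inl j => (j == (i + 1) %% n :> nat) || (i == (j + 1) %% n :> nat)
    | inr i, inr j => (j == (i + k) %% n :> nat) || (i == (j + k) %% n :> nat)
    | inl i, inr j => (i == j :> nat)
    | inr i, inl j => (i == j :> nat)
    end.
Arguments GPadj n k : clear implicits.

(* Main.v *)
Require Import Defs.
From mathcomp Require Import all_boot zify.
Set Implicit Arguments. Unset Strict Implicit. Unset Printing Implicit Defensive.

Definition Fuu k := minn k (k %/ 3 + k %% 3 + 2).
Definition Fuv k := k %/ 3 + k %% 3 + 1.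
Definition Fvv k := k %/ 3 + k %% 3 + 2 * minn 1 (k %% 3).
Definition FF (a b : bool) k :=
  if a then (if b then Fvv k else Fuv k) else (if b then Fuv k else Fuu k).
Definition dl n (a b : bool) k := minn (FF a b k) (FF a b (n - k)).

Lemma mod2 a n : a < n + n -> a %% n = if a < n then a else a - n.
Proof.
case: ifP => H1 H2; first by rewrite modn_small.
have H3 : a = (a - n) + n by rewrite subnK // leqNgt H1.
by rewrite {1}H3 modnDr modn_small // ltn_subLR // leqNgt H1.
Qed.

Ltac unF := rewrite /dl /FF /Fuu /Fuv /Fvv.

Lemma dl_s1 n a k : 16 < n -> k < n ->
  dl n a false ((k + 1) %% n) <= (dl n a false k).+1 /\
  dl n a false k <= (dl n a false ((k + 1) %% n)).+1.
Proof.
move=> Hn Hk; rewrite mod2; last by lia.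
case: ifP => H; case: a; unF; lia.
Qed.

Lemma dl_s3 n a k : 16 < n -> k < n ->
  dl n a true ((k + 3) %% n) <= (dl n a true k).+1 /\
  dl n a true k <= (dl n a true ((k + 3) %% n)).+1.
Proof.
move=> Hn Hk; rewrite mod2; last by lia.
case: ifP => H; case: a; unF; lia.
Qed.

Lemma dl_sw n a b k : 16 < n -> k < n ->
  dl n a b k <= (dl n a (~~ b) k).+1.
Proof.
move=> Hn Hk; case: a; case: b; unF => /=; lia.
Qed.

Ltac mdl := rewrite ?(mod2 (a:=_ + _)) //; try lia; repeat case: ifP => ?; unF => /=; lia.

Lemma dl_desc n a b k : 16 < n -> k < n -> 0 < dl n a b k ->
  dl n a (~~ b) k < dl n a b k \/ dl n a b ((k + (if b then 3 else 1)) %% n) < dl n a b k \/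
  dl n a b ((k + (n - (if b then 3 else 1))) %% n) < dl n a b k.
Proof.
move=> Hn Hk H0.
have [Hfw|Hbw] := leqP (FF a b k) (FF a b (n - k)).
- case: a b Hfw H0 => [] [] /= Hfw H0.
  + case: (ltnP 0 (k %% 3)) => Hr.
    * left; move: Hfw H0; unF => /=; lia.
    * right; right; move: Hfw H0; mdl.
  + case: (ltnP 0 (k %% 3)) => Hr.
    * right; right; move: Hfw H0; mdl.
    * left; move: Hfw H0; unF => /=; lia.
  + case: (ltnP k 3) => Hr.
    * left; move: Hfw H0; unF => /=; lia.
    * right; right; move: Hfw H0; mdl.
  + case: (leqP k 3) => Hr.
    * right; right; move: Hfw H0; mdl.
    * left; move: Hfw H0; unF => /=; lia.
- case: a b Hbw H0 => [] [] /= Hbw H0.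
  + case: (ltnP 0 ((n - k) %% 3)) => Hr.
    * left; move: Hbw H0; unF => /=; lia.
    * right; left; move: Hbw H0; mdl.
  + case: (ltnP 0 ((n - k) %% 3)) => Hr.
    * right; left; move: Hbw H0; mdl.
    * left; move: Hbw H0; unF => /=; lia.
  + case: (ltnP (n - k) 3) => Hr.
    * left; move: Hbw H0; unF => /=; lia.
    * right; left; move: Hbw H0; mdl.
  + case: (leqP (n - k) 3) => Hr.
    * right; left; move: Hbw H0; mdl.
    * left; move: Hbw H0; unF => /=; lia.
Qed.

Lemma dl0 n a b k : 16 < n -> k < n -> dl n a b k = 0 -> k = 0 /\ a = b.
Proof. move=> Hn Hk; case: a; case: b; unF => /= H; split => //; lia. Qed.

Lemma dl_self n a : 16 < n -> dl n a a 0 = 0.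
Proof. move=> Hn; case: a; unF => /=; lia. Qed.

Definition typ n (w : GPV n) : bool := if w is inr _ then true else false.
Definition idx n (w : GPV n) : nat := match w with inl i => val i | inr i => val i end.
Definition delta n (x y : GPV n) := dl n (typ x) (typ y) ((idx y + (n - idx x)) %% n).

Lemma idx_lt n (w : GPV n) : idx w < n.
Proof. by case: w => i /=. Qed.

Lemma off_shift n i c t : ((i + c) %% n + t) %% n = ((i + t) %% n + c) %% n.
Proof. by rewrite !modnDml addnAC. Qed.

Lemma lip n (x w z : GPV n) : 16 < n -> GPadj n 3 w z -> delta x z <= (delta x w).+1.
Proof.
move=> Hn; rewrite /delta.
have Hx := idx_lt x; set t := n - idx x.
case: w => i; case: z => j /=.
- case/orP => /eqP ->.
  + have Hi : (i + t) %% n < n by rewrite ltn_mod; lia.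
    by rewrite off_shift; case: (dl_s1 (typ x) Hn Hi).
  + have Hj : (j + t) %% n < n by rewrite ltn_mod; lia.
    by rewrite off_shift; case: (dl_s1 (typ x) Hn Hj).
- move/eqP => <-; have Hi : (i + t) %% n < n by rewrite ltn_mod; lia.
  exact: (dl_sw (typ x) true Hn Hi).
- move/eqP => <-; have Hi : (i + t) %% n < n by rewrite ltn_mod; lia.
  exact: (dl_sw (typ x) false Hn Hi).
- case/orP => /eqP ->.
  + have Hi : (i + t) %% n < n by rewrite ltn_mod; lia.
    by rewrite off_shift; case: (dl_s3 (typ x) Hn Hi).
  + have Hj : (j + t) %% n < n by rewrite ltn_mod; lia.
    by rewrite off_shift; case: (dl_s3 (typ x) Hn Hj).
Qed.

Lemma back_shift n j c : 0 < c -> c <= n -> j < n -> j = ((j + (n - c)) %% n + c) %% n.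
Proof.
move=> Hc Hcn Hj; rewrite modnDml -addnA subnK // modnDr modn_small //.
Qed.

Lemma desc n (x z : GPV n) : 16 < n -> 0 < delta x z ->
  exists w, GPadj n 3 w z && (delta x w < delta x z).
Proof.
move=> Hn; rewrite /delta.
have Hx := idx_lt x; set t := n - idx x.
have Hn0 : 0 < n by lia.
case: z => j /=; have Hj := ltn_ord j;
have Hk : (j + t) %% n < n by rewrite ltn_mod.
- move=> H0; case: (dl_desc Hn Hk H0) => [H|[H|H]].
  + by exists (inr j); rewrite /= eqxx.
  + exists (inl (Ordinal (ltn_pmod (j + 1) Hn0))); rewrite /= eqxx orbT /=.
    by rewrite off_shift.
  + exists (inl (Ordinal (ltn_pmod (j + (n - 1)) Hn0))); rewrite /=.
    rewrite -back_shift; try lia.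
    by rewrite eqxx /= off_shift.
- move=> H0; case: (dl_desc Hn Hk H0) => [H|[H|H]].
  + by exists (inl j); rewrite /= eqxx.
  + exists (inr (Ordinal (ltn_pmod (j + 3) Hn0))); rewrite /= eqxx orbT /=.
    by rewrite off_shift.
  + exists (inr (Ordinal (ltn_pmod (j + (n - 3)) Hn0))); rewrite /=.
    rewrite -back_shift; try lia.
    by rewrite eqxx /= off_shift.
Qed.

Lemma delta_self n (x : GPV n) : 16 < n -> delta x x = 0.
Proof.
move=> Hn; rewrite /delta subnKC ?modnn; last exact: ltnW (idx_lt x).
exact: dl_self.
Qed.

Lemma delta0 n (x y : GPV n) : 16 < n -> delta x y = 0 -> y = x.
Proof.
move=> Hn; rewrite /delta => H.
have Hx := idx_lt x; have Hy := idx_lt y.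
have Hn0 : 0 < n by lia.
have [Hk Ht] := dl0 Hn (ltn_pmod _ Hn0) H.
move: Hk; rewrite mod2; last lia.
move=> Hk; have He : idx y = idx x by move: Hk; case: ifP => ?; lia.
move: Ht He; clear Hx Hy H Hk; case: x => i; case: y => j //= _ He; by rewrite (val_inj He).
Qed.

Lemma ball_delta n d (x y : GPV n) : 16 < n ->
  (y \in ball (GPadj n 3) d x) = (delta x y <= d).
Proof.
move=> Hn; elim: d y => [|d IH] y /=.
- rewrite in_set1 leqn0; apply/eqP/eqP => [->|]; first exact: delta_self.
  exact: delta0.
- rewrite in_setU in_set IH; apply/idP/idP.
  + case/orP => [H|/existsP[w /andP[Hw Hwy]]]; first exact: leqW.
    rewrite IH in Hw; exact: leq_trans (lip x Hn Hwy) _.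
  + move=> H; case: (leqP (delta x y) d) => H1 //=.
    have H0 : 0 < delta x y by lia.
    case: (desc Hn H0) => w /andP[Hwy Hw].
    by apply/existsP; exists w; rewrite IH Hwy andbT; lia.
Qed.

Lemma find_le a s N : s <= a < s + N -> find (fun d => a <= d) (iota s N) = a - s.
Proof.
elim: N s => [|N IH] s /=; first lia.
move=> H; case: ifP => H1; first lia.
rewrite IH; lia.
Qed.

Lemma dl_lt n a b k : 16 < n -> k < n -> dl n a b k < n + n.
Proof. move=> Hn Hk; case: a; case: b; unF => /=; lia. Qed.

Lemma gdist_delta n (x y : GPV n) : 16 < n -> gdist (GPadj n 3) x y = delta x y.
Proof.
move=> Hn; rewrite /gdist (eq_find (a2 := fun d => delta x y <= d)).
- rewrite card_sum card_ord find_le ?subn0 //= add0n.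
  apply: dl_lt => //; rewrite ltn_mod; lia.
- by move=> d; rewrite ball_delta.
Qed.

Lemma FF_sym a b k : FF a b k = FF b a k.
Proof. by case: a; case: b. Qed.

Lemma dl_swap n a b k : dl n a b k = dl n b a k.
Proof. by rewrite /dl (FF_sym a b k) (FF_sym a b (n - k)). Qed.

Lemma dl_flip n a b k : k <= n -> dl n a b (n - k) = dl n a b k.
Proof. by move=> Hk; rewrite /dl subKn // minnC. Qed.

Lemma delta_sym n (x y : GPV n) : 16 < n -> delta x y = delta y x.
Proof.
move=> Hn; rewrite /delta dl_swap.
have Hx := idx_lt x; have Hy := idx_lt y.
rewrite !mod2; try lia.
case: ifP => H1; case: ifP => H2; try lia.
- have -> : idx y + (n - idx x) = n - (idx x + (n - idx y) - n) by lia.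
  by rewrite dl_flip //; lia.
- have -> : idx x + (n - idx y) = n - (idx y + (n - idx x) - n) by lia.
  by rewrite dl_flip //; lia.
- have -> : idx y + (n - idx x) - n = idx x + (n - idx y) - n by lia.
  done.
Qed.

Definition oo n m i := (i + (n - m)) %% n.
Definition gxy n m i := (dl n false false i < dl n true false (oo n m i)) +
                        (dl n false true i < dl n true true (oo n m i)).
Definition gyx n m i := (dl n true false (oo n m i) < dl n false false i) +
                        (dl n true true (oo n m i) < dl n false true i).

Lemma card_W n m (Hn : 16 < n) (H0 : 0 < n) (Hm : m < n) :
  let x : GPV n := inl (Ordinal H0) in
  let y : GPV n := inr (Ordinal Hm) in
  #|Wset (GPadj n 3) x y| = \sum_(0 <= i < n) gxy n m i /\
  #|Wset (GPadj n 3) y x| = \sum_(0 <= i < n) gyx n m i.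
Proof.
move=> x y.
have cnt : forall (P : GPV n -> bool), #|[set w | P w]| =
   \sum_(i < n) (P (inl i) : nat) + \sum_(i < n) (P (inr i) : nat).
  move=> P; rewrite -sum1_card big_mkcond /= big_sumType /=.
  by congr (_ + _); apply: eq_bigr => i _; rewrite in_set; case: (P _).
rewrite /Wset !cnt -!big_split /=.
rewrite !big_mkord; split; apply: eq_bigr => i _;
rewrite !gdist_delta // ![delta (inl i) _]delta_sym // ![delta (inr i) _]delta_sym //;
rewrite /delta /= (_ : (i + (n - 0)) %% n = i) //;
by rewrite subn0 modnDr modn_small.
Qed.


Definition Hyp n m := [/\ 24 <= n, m + m <= n, 6 <= m & m %% 3 != 1].

Lemma bulkP1 n m i : Hyp n m -> i < m %/ 2 - 6 ->
  dl n false false i < dl n true false (oo n m i) /\ dl n false true i < dl n true true (oo n m i).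
Proof.
case=> H1 H2 H3 H4 Hi; rewrite /oo mod2; last lia.
case: ifP => H5; unF => /=; split; lia.
Qed.

Lemma bulkM n m i : Hyp n m -> m %/ 2 + 6 <= i < (n + m) %/ 2 - 6 ->
  dl n true false (oo n m i) < dl n false false i /\ dl n true true (oo n m i) < dl n false true i.
Proof.
case=> H1 H2 H3 H4 Hi; rewrite /oo mod2; last lia.
case: ifP => H5; unF => /=; split; lia.
Qed.

Lemma bulkP2 n m i : Hyp n m -> (n + m) %/ 2 + 6 <= i < n ->
  dl n false false i < dl n true false (oo n m i) /\ dl n false true i < dl n true true (oo n m i).
Proof.
case=> H1 H2 H3 H4 Hi; rewrite /oo mod2; last lia.
case: ifP => H5; unF => /=; split; lia.
Qed.

Lemma oo_ge n m i : m <= i -> i < n -> m < n -> oo n m i = i - m.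
Proof. move=> *; rewrite /oo mod2; [case: ifP; lia | lia]. Qed.
Lemma oo_lt n m i : i < m -> m < n -> oo n m i = i + (n - m).
Proof. move=> *; rewrite /oo mod2; [case: ifP; lia | lia]. Qed.

Lemma oo_lt' n m i : i < m -> m < 24 -> 23 < n -> oo n m i = i + (n - m).
Proof. move=> *; apply: oo_lt; lia. Qed.
Lemma oo_ge' n m i : m <= i -> i < 24 -> 23 < n -> oo n m i = i - m.
Proof. move=> *; apply: oo_ge; lia. Qed.

Lemma sum12 (f : nat -> nat) a : \sum_(a <= i < a + 12) f i =
  f a + (f (a+1) + (f (a+2) + (f (a+3) + (f (a+4) + (f (a+5) + (f (a+6) +
  (f (a+7) + (f (a+8) + (f (a+9) + (f (a+10) + (f (a+11) + 0))))))))))).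
Proof.
rewrite -{1}(add0n a) big_addn addKn unlock /=.
by rewrite !(addnC a).
Qed.

Ltac cmpT o := match goal with |- context [ (?X < ?Y) ] =>
  let E := fresh "E" in
  lazymatch o with
  | 0 => (have E : X < Y by unF => /=; lia); rewrite E (ltnNge Y X) (ltnW E) /=
  | 1 => (have E : X = Y by unF => /=; lia); rewrite E ltnn
  | 2 => (have E : Y < X by unF => /=; lia); rewrite E (ltnNge X Y) (ltnW E) /=
  end; clear E end.


Lemma W2_0_0 n m K M : Hyp n m -> n + m = 6 * K + 0 -> m = 3 * M + 0 ->
  (\sum_(3 * K + 0 - 6 <= i < 3 * K + 0 - 6 + 12) gxy n m i,
   \sum_(3 * K + 0 - 6 <= i < 3 * K + 0 - 6 + 12) gyx n m i) = (10, 14).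
Proof.
case=> H1 H2 H3 H4 HK Hm.
rewrite !sum12 /gxy /gyx !oo_ge; [ | lia ..].
subst m; clear H4.
cmpT 2; cmpT 2; cmpT 2; cmpT 2; cmpT 2; cmpT 2; cmpT 2; cmpT 2; cmpT 2; cmpT 2; cmpT 2; cmpT 0; cmpT 2; cmpT 2; cmpT 2; cmpT 0; cmpT 0; cmpT 0; cmpT 0; cmpT 0; cmpT 0; cmpT 0; cmpT 0; cmpT 0.
done.
Qed.

Lemma W2_0_1 n m K M : Hyp n m -> n + m = 6 * K + 1 -> m = 3 * M + 0 ->
  (\sum_(3 * K + 0 - 6 <= i < 3 * K + 0 - 6 + 12) gxy n m i,
   \sum_(3 * K + 0 - 6 <= i < 3 * K + 0 - 6 + 12) gyx n m i) = (6, 12).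
Proof.
case=> H1 H2 H3 H4 HK Hm.
rewrite !sum12 /gxy /gyx !oo_ge; [ | lia ..].
subst m; clear H4.
cmpT 2; cmpT 2; cmpT 2; cmpT 2; cmpT 2; cmpT 2; cmpT 2; cmpT 2; cmpT 2; cmpT 1; cmpT 2; cmpT 1; cmpT 2; cmpT 2; cmpT 1; cmpT 0; cmpT 1; cmpT 0; cmpT 1; cmpT 1; cmpT 0; cmpT 0; cmpT 0; cmpT 0.
done.
Qed.

Lemma W2_0_2 n m K M : Hyp n m -> n + m = 6 * K + 2 -> m = 3 * M + 0 ->
  (\sum_(3 * K + 1 - 6 <= i < 3 * K + 1 - 6 + 12) gxy n m i,
   \sum_(3 * K + 1 - 6 <= i < 3 * K + 1 - 6 + 12) gyx n m i) = (10, 14).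
Proof.
case=> H1 H2 H3 H4 HK Hm.
rewrite !sum12 /gxy /gyx !oo_ge; [ | lia ..].
subst m; clear H4.
cmpT 2; cmpT 2; cmpT 2; cmpT 2; cmpT 2; cmpT 2; cmpT 2; cmpT 2; cmpT 2; cmpT 0; cmpT 2; cmpT 2; cmpT 2; cmpT 0; cmpT 0; cmpT 0; cmpT 2; cmpT 2; cmpT 0; cmpT 0; cmpT 0; cmpT 0; cmpT 0; cmpT 0.
done.
Qed.

Lemma W2_0_3 n m K M : Hyp n m -> n + m = 6 * K + 3 -> m = 3 * M + 0 ->
  (\sum_(3 * K + 1 - 6 <= i < 3 * K + 1 - 6 + 12) gxy n m i,
   \sum_(3 * K + 1 - 6 <= i < 3 * K + 1 - 6 + 12) gyx n m i) = (6, 12).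
Proof.
case=> H1 H2 H3 H4 HK Hm.
rewrite !sum12 /gxy /gyx !oo_ge; [ | lia ..].
subst m; clear H4.
cmpT 2; cmpT 2; cmpT 2; cmpT 2; cmpT 2; cmpT 2; cmpT 2; cmpT 2; cmpT 2; cmpT 1; cmpT 2; cmpT 2; cmpT 2; cmpT 1; cmpT 1; cmpT 0; cmpT 1; cmpT 1; cmpT 1; cmpT 0; cmpT 0; cmpT 0; cmpT 0; cmpT 0.
done.
Qed.

Lemma W2_0_4 n m K M : Hyp n m -> n + m = 6 * K + 4 -> m = 3 * M + 0 ->
  (\sum_(3 * K + 2 - 6 <= i < 3 * K + 2 - 6 + 12) gxy n m i,
   \sum_(3 * K + 2 - 6 <= i < 3 * K + 2 - 6 + 12) gyx n m i) = (10, 14).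
Proof.
case=> H1 H2 H3 H4 HK Hm.
rewrite !sum12 /gxy /gyx !oo_ge; [ | lia ..].
subst m; clear H4.
cmpT 2; cmpT 2; cmpT 2; cmpT 2; cmpT 2; cmpT 2; cmpT 2; cmpT 2; cmpT 2; cmpT 2; cmpT 2; cmpT 0; cmpT 2; cmpT 0; cmpT 2; cmpT 2; cmpT 0; cmpT 0; cmpT 0; cmpT 0; cmpT 0; cmpT 0; cmpT 0; cmpT 0.
done.
Qed.

Lemma W2_0_5 n m K M : Hyp n m -> n + m = 6 * K + 5 -> m = 3 * M + 0 ->
  (\sum_(3 * K + 2 - 6 <= i < 3 * K + 2 - 6 + 12) gxy n m i,
   \sum_(3 * K + 2 - 6 <= i < 3 * K + 2 - 6 + 12) gyx n m i) = (6, 12).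
Proof.
case=> H1 H2 H3 H4 HK Hm.
rewrite !sum12 /gxy /gyx !oo_ge; [ | lia ..].
subst m; clear H4.
cmpT 2; cmpT 2; cmpT 2; cmpT 2; cmpT 2; cmpT 2; cmpT 2; cmpT 1; cmpT 2; cmpT 2; cmpT 2; cmpT 1; cmpT 1; cmpT 0; cmpT 2; cmpT 2; cmpT 1; cmpT 0; cmpT 0; cmpT 0; cmpT 1; cmpT 1; cmpT 0; cmpT 0.
done.
Qed.

Lemma W2_2_0 n m K M : Hyp n m -> n + m = 6 * K + 0 -> m = 3 * M + 2 ->
  (\sum_(3 * K + 0 - 6 <= i < 3 * K + 0 - 6 + 12) gxy n m i,
   \sum_(3 * K + 0 - 6 <= i < 3 * K + 0 - 6 + 12) gyx n m i) = (10, 14).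
Proof.
case=> H1 H2 H3 H4 HK Hm.
rewrite !sum12 /gxy /gyx !oo_ge; [ | lia ..].
subst m; clear H4.
cmpT 2; cmpT 2; cmpT 2; cmpT 2; cmpT 2; cmpT 2; cmpT 2; cmpT 2; cmpT 2; cmpT 0; cmpT 2; cmpT 2; cmpT 2; cmpT 0; cmpT 0; cmpT 0; cmpT 2; cmpT 2; cmpT 0; cmpT 0; cmpT 0; cmpT 0; cmpT 0; cmpT 0.
done.
Qed.

Lemma W2_2_1 n m K M : Hyp n m -> n + m = 6 * K + 1 -> m = 3 * M + 2 ->
  (\sum_(3 * K + 0 - 6 <= i < 3 * K + 0 - 6 + 12) gxy n m i,
   \sum_(3 * K + 0 - 6 <= i < 3 * K + 0 - 6 + 12) gyx n m i) = (6, 12).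
Proof.
case=> H1 H2 H3 H4 HK Hm.
rewrite !sum12 /gxy /gyx !oo_ge; [ | lia ..].
subst m; clear H4.
cmpT 2; cmpT 2; cmpT 2; cmpT 2; cmpT 2; cmpT 2; cmpT 2; cmpT 2; cmpT 2; cmpT 1; cmpT 2; cmpT 2; cmpT 2; cmpT 1; cmpT 1; cmpT 0; cmpT 1; cmpT 1; cmpT 1; cmpT 0; cmpT 0; cmpT 0; cmpT 0; cmpT 0.
done.
Qed.

Lemma W2_2_2 n m K M : Hyp n m -> n + m = 6 * K + 2 -> m = 3 * M + 2 ->
  (\sum_(3 * K + 1 - 6 <= i < 3 * K + 1 - 6 + 12) gxy n m i,
   \sum_(3 * K + 1 - 6 <= i < 3 * K + 1 - 6 + 12) gyx n m i) = (10, 14).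
Proof.
case=> H1 H2 H3 H4 HK Hm.
rewrite !sum12 /gxy /gyx !oo_ge; [ | lia ..].
subst m; clear H4.
cmpT 2; cmpT 2; cmpT 2; cmpT 2; cmpT 2; cmpT 2; cmpT 2; cmpT 2; cmpT 2; cmpT 2; cmpT 2; cmpT 0; cmpT 2; cmpT 0; cmpT 2; cmpT 2; cmpT 0; cmpT 0; cmpT 0; cmpT 0; cmpT 0; cmpT 0; cmpT 0; cmpT 0.
done.
Qed.

Lemma W2_2_3 n m K M : Hyp n m -> n + m = 6 * K + 3 -> m = 3 * M + 2 ->
  (\sum_(3 * K + 1 - 6 <= i < 3 * K + 1 - 6 + 12) gxy n m i,
   \sum_(3 * K + 1 - 6 <= i < 3 * K + 1 - 6 + 12) gyx n m i) = (6, 12).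
Proof.
case=> H1 H2 H3 H4 HK Hm.
rewrite !sum12 /gxy /gyx !oo_ge; [ | lia ..].
subst m; clear H4.
cmpT 2; cmpT 2; cmpT 2; cmpT 2; cmpT 2; cmpT 2; cmpT 2; cmpT 1; cmpT 2; cmpT 2; cmpT 2; cmpT 1; cmpT 1; cmpT 0; cmpT 2; cmpT 2; cmpT 1; cmpT 0; cmpT 0; cmpT 0; cmpT 1; cmpT 1; cmpT 0; cmpT 0.
done.
Qed.

Lemma W2_2_4 n m K M : Hyp n m -> n + m = 6 * K + 4 -> m = 3 * M + 2 ->
  (\sum_(3 * K + 2 - 6 <= i < 3 * K + 2 - 6 + 12) gxy n m i,
   \sum_(3 * K + 2 - 6 <= i < 3 * K + 2 - 6 + 12) gyx n m i) = (10, 14).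
Proof.
case=> H1 H2 H3 H4 HK Hm.
rewrite !sum12 /gxy /gyx !oo_ge; [ | lia ..].
subst m; clear H4.
cmpT 2; cmpT 2; cmpT 2; cmpT 2; cmpT 2; cmpT 2; cmpT 2; cmpT 2; cmpT 2; cmpT 2; cmpT 2; cmpT 0; cmpT 2; cmpT 2; cmpT 2; cmpT 0; cmpT 0; cmpT 0; cmpT 0; cmpT 0; cmpT 0; cmpT 0; cmpT 0; cmpT 0.
done.
Qed.

Lemma W2_2_5 n m K M : Hyp n m -> n + m = 6 * K + 5 -> m = 3 * M + 2 ->
  (\sum_(3 * K + 2 - 6 <= i < 3 * K + 2 - 6 + 12) gxy n m i,
   \sum_(3 * K + 2 - 6 <= i < 3 * K + 2 - 6 + 12) gyx n m i) = (6, 12).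
Proof.
case=> H1 H2 H3 H4 HK Hm.
rewrite !sum12 /gxy /gyx !oo_ge; [ | lia ..].
subst m; clear H4.
cmpT 2; cmpT 2; cmpT 2; cmpT 2; cmpT 2; cmpT 2; cmpT 2; cmpT 2; cmpT 2; cmpT 1; cmpT 2; cmpT 1; cmpT 2; cmpT 2; cmpT 1; cmpT 0; cmpT 1; cmpT 0; cmpT 1; cmpT 1; cmpT 0; cmpT 0; cmpT 0; cmpT 0.
done.
Qed.

Lemma W1_0 n m P : Hyp n m -> m = 6 * P + 0 -> 2 <= P ->
  (\sum_(3 * P + 0 - 6 <= i < 3 * P + 0 - 6 + 12) gxy n m i,
   \sum_(3 * P + 0 - 6 <= i < 3 * P + 0 - 6 + 12) gyx n m i) = (12, 12).
Proof.
case=> H1 H2 H3 H4 Hm HP.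
rewrite !sum12 /gxy /gyx !oo_lt; [ | lia ..].
subst m; clear H4.
cmpT 0; cmpT 0; cmpT 0; cmpT 0; cmpT 0; cmpT 0; cmpT 0; cmpT 0; cmpT 0; cmpT 0; cmpT 2; cmpT 0; cmpT 2; cmpT 2; cmpT 2; cmpT 0; cmpT 2; cmpT 2; cmpT 2; cmpT 2; cmpT 2; cmpT 2; cmpT 2; cmpT 2.
done.
Qed.

Lemma W1_2 n m P : Hyp n m -> m = 6 * P + 2 -> 2 <= P ->
  (\sum_(3 * P + 1 - 6 <= i < 3 * P + 1 - 6 + 12) gxy n m i,
   \sum_(3 * P + 1 - 6 <= i < 3 * P + 1 - 6 + 12) gyx n m i) = (12, 12).
Proof.
case=> H1 H2 H3 H4 Hm HP.
rewrite !sum12 /gxy /gyx !oo_lt; [ | lia ..].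
subst m; clear H4.
cmpT 0; cmpT 0; cmpT 0; cmpT 0; cmpT 0; cmpT 0; cmpT 0; cmpT 0; cmpT 2; cmpT 2; cmpT 0; cmpT 0; cmpT 2; cmpT 0; cmpT 2; cmpT 2; cmpT 2; cmpT 0; cmpT 2; cmpT 2; cmpT 2; cmpT 2; cmpT 2; cmpT 2.
done.
Qed.

Lemma W1_3 n m P : Hyp n m -> m = 6 * P + 3 -> 2 <= P ->
  (\sum_(3 * P + 1 - 6 <= i < 3 * P + 1 - 6 + 12) gxy n m i,
   \sum_(3 * P + 1 - 6 <= i < 3 * P + 1 - 6 + 12) gyx n m i) = (10, 8).
Proof.
case=> H1 H2 H3 H4 Hm HP.
rewrite !sum12 /gxy /gyx !oo_lt; [ | lia ..].
subst m; clear H4.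
cmpT 0; cmpT 0; cmpT 0; cmpT 0; cmpT 0; cmpT 0; cmpT 0; cmpT 0; cmpT 1; cmpT 0; cmpT 1; cmpT 1; cmpT 1; cmpT 0; cmpT 2; cmpT 1; cmpT 2; cmpT 2; cmpT 2; cmpT 1; cmpT 2; cmpT 2; cmpT 2; cmpT 2.
done.
Qed.

Lemma W1_5 n m P : Hyp n m -> m = 6 * P + 5 -> 2 <= P ->
  (\sum_(3 * P + 2 - 6 <= i < 3 * P + 2 - 6 + 12) gxy n m i,
   \sum_(3 * P + 2 - 6 <= i < 3 * P + 2 - 6 + 12) gyx n m i) = (10, 8).
Proof.
case=> H1 H2 H3 H4 Hm HP.
rewrite !sum12 /gxy /gyx !oo_lt; [ | lia ..].
subst m; clear H4.
cmpT 0; cmpT 0; cmpT 0; cmpT 0; cmpT 0; cmpT 0; cmpT 1; cmpT 1; cmpT 0; cmpT 0; cmpT 1; cmpT 0; cmpT 2; cmpT 2; cmpT 1; cmpT 0; cmpT 2; cmpT 1; cmpT 2; cmpT 2; cmpT 2; cmpT 1; cmpT 2; cmpT 2.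
done.
Qed.

Lemma W1s_6 n : Hyp n 6 ->
  (\sum_(0 <= i < 9) gxy n 6 i, \sum_(0 <= i < 9) gyx n 6 i) = (7, 11).
Proof.
case=> H1 H2 H3 H4.
rewrite /index_iota subn0; cbn [iota]. rewrite !big_cons !big_nil.
rewrite /gxy /gyx.
rewrite (@oo_lt' n 6 0) //. rewrite (@oo_lt' n 6 1) //. rewrite (@oo_lt' n 6 2) //. rewrite (@oo_lt' n 6 3) //. rewrite (@oo_lt' n 6 4) //. rewrite (@oo_lt' n 6 5) //. rewrite (@oo_ge' n 6 6) //. rewrite (@oo_ge' n 6 7) //. rewrite (@oo_ge' n 6 8) //.
cmpT 0; cmpT 0; cmpT 0; cmpT 0; cmpT 0; cmpT 0; cmpT 2; cmpT 2; cmpT 2; cmpT 0; cmpT 2; cmpT 2; cmpT 2; cmpT 2; cmpT 2; cmpT 2; cmpT 2; cmpT 2.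
done.
Qed.

Lemma W1s_8 n : Hyp n 8 ->
  (\sum_(0 <= i < 10) gxy n 8 i, \sum_(0 <= i < 10) gyx n 8 i) = (9, 11).
Proof.
case=> H1 H2 H3 H4.
rewrite /index_iota subn0; cbn [iota]. rewrite !big_cons !big_nil.
rewrite /gxy /gyx.
rewrite (@oo_lt' n 8 0) //. rewrite (@oo_lt' n 8 1) //. rewrite (@oo_lt' n 8 2) //. rewrite (@oo_lt' n 8 3) //. rewrite (@oo_lt' n 8 4) //. rewrite (@oo_lt' n 8 5) //. rewrite (@oo_lt' n 8 6) //. rewrite (@oo_lt' n 8 7) //. rewrite (@oo_ge' n 8 8) //. rewrite (@oo_ge' n 8 9) //.
cmpT 0; cmpT 0; cmpT 0; cmpT 0; cmpT 0; cmpT 2; cmpT 0; cmpT 0; cmpT 2; cmpT 0; cmpT 2; cmpT 2; cmpT 2; cmpT 0; cmpT 2; cmpT 2; cmpT 2; cmpT 2; cmpT 2; cmpT 2.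
done.
Qed.

Lemma W1s_9 n : Hyp n 9 ->
  (\sum_(0 <= i < 10) gxy n 9 i, \sum_(0 <= i < 10) gyx n 9 i) = (7, 8).
Proof.
case=> H1 H2 H3 H4.
rewrite /index_iota subn0; cbn [iota]. rewrite !big_cons !big_nil.
rewrite /gxy /gyx.
rewrite (@oo_lt' n 9 0) //. rewrite (@oo_lt' n 9 1) //. rewrite (@oo_lt' n 9 2) //. rewrite (@oo_lt' n 9 3) //. rewrite (@oo_lt' n 9 4) //. rewrite (@oo_lt' n 9 5) //. rewrite (@oo_lt' n 9 6) //. rewrite (@oo_lt' n 9 7) //. rewrite (@oo_lt' n 9 8) //. rewrite (@oo_ge' n 9 9) //.
cmpT 0; cmpT 0; cmpT 0; cmpT 0; cmpT 0; cmpT 0; cmpT 1; cmpT 1; cmpT 1; cmpT 0; cmpT 2; cmpT 1; cmpT 2; cmpT 2; cmpT 2; cmpT 1; cmpT 2; cmpT 2; cmpT 2; cmpT 2.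
done.
Qed.

Lemma W1s_11 n : Hyp n 11 ->
  (\sum_(0 <= i < 11) gxy n 11 i, \sum_(0 <= i < 11) gyx n 11 i) = (9, 8).
Proof.
case=> H1 H2 H3 H4.
rewrite /index_iota subn0; cbn [iota]. rewrite !big_cons !big_nil.
rewrite /gxy /gyx.
rewrite (@oo_lt' n 11 0) //. rewrite (@oo_lt' n 11 1) //. rewrite (@oo_lt' n 11 2) //. rewrite (@oo_lt' n 11 3) //. rewrite (@oo_lt' n 11 4) //. rewrite (@oo_lt' n 11 5) //. rewrite (@oo_lt' n 11 6) //. rewrite (@oo_lt' n 11 7) //. rewrite (@oo_lt' n 11 8) //. rewrite (@oo_lt' n 11 9) //. rewrite (@oo_lt' n 11 10) //.
cmpT 0; cmpT 0; cmpT 0; cmpT 0; cmpT 0; cmpT 1; cmpT 0; cmpT 0; cmpT 1; cmpT 0; cmpT 2; cmpT 2; cmpT 1; cmpT 0; cmpT 2; cmpT 1; cmpT 2; cmpT 2; cmpT 2; cmpT 1; cmpT 2; cmpT 2.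
done.
Qed.


Lemma sum_const a b (f : nat -> nat) v : (forall i, a <= i < b -> f i = v) ->
  \sum_(a <= i < b) f i = (b - a) * v.
Proof. by move=> H; rewrite (eq_big_nat _ _ H) sum_nat_const_nat. Qed.

Lemma gvalP n m i : dl n false false i < dl n true false (oo n m i) /\
  dl n false true i < dl n true true (oo n m i) -> gxy n m i = 2 /\ gyx n m i = 0.
Proof.
case=> H1 H2; rewrite /gxy /gyx H1 H2.
by rewrite (ltnNge (dl n true false _)) (ltnW H1) (ltnNge (dl n true true _)) (ltnW H2).
Qed.

Lemma gvalM n m i : dl n true false (oo n m i) < dl n false false i /\
  dl n true true (oo n m i) < dl n false true i -> gxy n m i = 0 /\ gyx n m i = 2.
Proof.
case=> H1 H2; rewrite /gxy /gyx H1 H2.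
by rewrite (ltnNge (dl n false false _)) (ltnW H1) (ltnNge (dl n false true _)) (ltnW H2).
Qed.

Lemma W2_all n m : Hyp n m ->
  ((n + m) %% 2 = 0 /\
   (\sum_((n + m) %/ 2 - 6 <= i < (n + m) %/ 2 + 6) gxy n m i,
    \sum_((n + m) %/ 2 - 6 <= i < (n + m) %/ 2 + 6) gyx n m i) = (10, 14)) \/
  ((n + m) %% 2 = 1 /\
   (\sum_((n + m) %/ 2 - 6 <= i < (n + m) %/ 2 + 6) gxy n m i,
    \sum_((n + m) %/ 2 - 6 <= i < (n + m) %/ 2 + 6) gyx n m i) = (6, 12)).
Proof.
move=> HH; have [H1 H2 H3 /eqP H4] := HH.
have HK := divn_eq (n + m) 6; have HM := divn_eq m 3.
move: HK HM; set K := (n + m) %/ 6; set M := m %/ 3 => HK HM.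
have Hr : (n + m) %% 6 < 6 by rewrite ltn_mod.
have Hm3 : m %% 3 = 0 \/ m %% 3 = 2 by lia.
have Hc : (n + m) %% 6 = 0 \/ (n + m) %% 6 = 1 \/ (n + m) %% 6 = 2 \/
          (n + m) %% 6 = 3 \/ (n + m) %% 6 = 4 \/ (n + m) %% 6 = 5 by lia.
case: Hm3 => Hm3; case: Hc => [Hc|[Hc|[Hc|[Hc|[Hc|Hc]]]]].
- left; split; first lia.
  have -> : (n + m) %/ 2 - 6 = 3 * K + 0 - 6 by lia.
  have -> : (n + m) %/ 2 + 6 = 3 * K + 0 - 6 + 12 by lia.
  apply: (@W2_0_0 n m K M HH); lia.
- right; split; first lia.
  have -> : (n + m) %/ 2 - 6 = 3 * K + 0 - 6 by lia.
  have -> : (n + m) %/ 2 + 6 = 3 * K + 0 - 6 + 12 by lia.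
  apply: (@W2_0_1 n m K M HH); lia.
- left; split; first lia.
  have -> : (n + m) %/ 2 - 6 = 3 * K + 1 - 6 by lia.
  have -> : (n + m) %/ 2 + 6 = 3 * K + 1 - 6 + 12 by lia.
  apply: (@W2_0_2 n m K M HH); lia.
- right; split; first lia.
  have -> : (n + m) %/ 2 - 6 = 3 * K + 1 - 6 by lia.
  have -> : (n + m) %/ 2 + 6 = 3 * K + 1 - 6 + 12 by lia.
  apply: (@W2_0_3 n m K M HH); lia.
- left; split; first lia.
  have -> : (n + m) %/ 2 - 6 = 3 * K + 2 - 6 by lia.
  have -> : (n + m) %/ 2 + 6 = 3 * K + 2 - 6 + 12 by lia.
  apply: (@W2_0_4 n m K M HH); lia.
- right; split; first lia.
  have -> : (n + m) %/ 2 - 6 = 3 * K + 2 - 6 by lia.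
  have -> : (n + m) %/ 2 + 6 = 3 * K + 2 - 6 + 12 by lia.
  apply: (@W2_0_5 n m K M HH); lia.
- left; split; first lia.
  have -> : (n + m) %/ 2 - 6 = 3 * K + 0 - 6 by lia.
  have -> : (n + m) %/ 2 + 6 = 3 * K + 0 - 6 + 12 by lia.
  apply: (@W2_2_0 n m K M HH); lia.
- right; split; first lia.
  have -> : (n + m) %/ 2 - 6 = 3 * K + 0 - 6 by lia.
  have -> : (n + m) %/ 2 + 6 = 3 * K + 0 - 6 + 12 by lia.
  apply: (@W2_2_1 n m K M HH); lia.
- left; split; first lia.
  have -> : (n + m) %/ 2 - 6 = 3 * K + 1 - 6 by lia.
  have -> : (n + m) %/ 2 + 6 = 3 * K + 1 - 6 + 12 by lia.
  apply: (@W2_2_2 n m K M HH); lia.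
- right; split; first lia.
  have -> : (n + m) %/ 2 - 6 = 3 * K + 1 - 6 by lia.
  have -> : (n + m) %/ 2 + 6 = 3 * K + 1 - 6 + 12 by lia.
  apply: (@W2_2_3 n m K M HH); lia.
- left; split; first lia.
  have -> : (n + m) %/ 2 - 6 = 3 * K + 2 - 6 by lia.
  have -> : (n + m) %/ 2 + 6 = 3 * K + 2 - 6 + 12 by lia.
  apply: (@W2_2_4 n m K M HH); lia.
- right; split; first lia.
  have -> : (n + m) %/ 2 - 6 = 3 * K + 2 - 6 by lia.
  have -> : (n + m) %/ 2 + 6 = 3 * K + 2 - 6 + 12 by lia.
  apply: (@W2_2_5 n m K M HH); lia.
Qed.

Lemma W1_all n m : Hyp n m -> (m = 6 \/ m = 8 \/ m = 9 \/ m = 11 \/ 12 <= m) ->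
  exists x y, (\sum_(m %/ 2 - 6 <= i < m %/ 2 + 6) gxy n m i,
    \sum_(m %/ 2 - 6 <= i < m %/ 2 + 6) gyx n m i) = (x, y) /\
  ((m = 6 /\ x = 7 /\ y = 11) \/ (m = 8 /\ x = 9 /\ y = 11) \/ (m = 9 /\ x = 7 /\ y = 8) \/
   (m = 11 /\ x = 9 /\ y = 8) \/ (12 <= m /\ m %% 2 = 0 /\ x = 12 /\ y = 12) \/
   (12 <= m /\ m %% 2 = 1 /\ x = 10 /\ y = 8)).
Proof.
move=> HH Hm; have [H1 H2 H3 /eqP H4] := HH.
case: Hm => [E|[E|[E|[E|Hm]]]].
- subst m; exists 7, 11; split; [exact: W1s_6 | lia].
- subst m; exists 9, 11; split; [exact: W1s_8 | lia].
- subst m; exists 7, 8; split; [exact: W1s_9 | lia].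
- subst m; exists 9, 8; split; [exact: W1s_11 | lia].
have HP := divn_eq m 6; move: HP; set P := m %/ 6 => HP.
have Hc : m %% 6 = 0 \/ m %% 6 = 2 \/ m %% 6 = 3 \/ m %% 6 = 5 by lia.
case: Hc => [Hc|[Hc|[Hc|Hc]]].
- exists 12, 12; split; last lia.
  have -> : m %/ 2 - 6 = 3 * P + 0 - 6 by lia.
  have -> : m %/ 2 + 6 = 3 * P + 0 - 6 + 12 by lia.
  apply: (@W1_0 n m P HH); lia.
- exists 12, 12; split; last lia.
  have -> : m %/ 2 - 6 = 3 * P + 1 - 6 by lia.
  have -> : m %/ 2 + 6 = 3 * P + 1 - 6 + 12 by lia.
  apply: (@W1_2 n m P HH); lia.
- exists 10, 8; split; last lia.
  have -> : m %/ 2 - 6 = 3 * P + 1 - 6 by lia.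
  have -> : m %/ 2 + 6 = 3 * P + 1 - 6 + 12 by lia.
  apply: (@W1_3 n m P HH); lia.
- exists 10, 8; split; last lia.
  have -> : m %/ 2 - 6 = 3 * P + 2 - 6 by lia.
  have -> : m %/ 2 + 6 = 3 * P + 2 - 6 + 12 by lia.
  apply: (@W1_5 n m P HH); lia.
Qed.


Lemma count_main n m : Hyp n m -> (m = 6 \/ m = 8 \/ m = 9 \/ m = 11 \/ 12 <= m) ->
  \sum_(0 <= i < n) gxy n m i < \sum_(0 <= i < n) gyx n m i.
Proof.
move=> HH Hm; have [H1 H2 H3 /eqP H4] := HH.
have E : forall f : nat -> nat, \sum_(0 <= i < n) f i =
   \sum_(0 <= i < m %/ 2 - 6) f i + \sum_(m %/ 2 - 6 <= i < m %/ 2 + 6) f i +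
   \sum_(m %/ 2 + 6 <= i < (n + m) %/ 2 - 6) f i +
   \sum_((n + m) %/ 2 - 6 <= i < (n + m) %/ 2 + 6) f i +
   \sum_((n + m) %/ 2 + 6 <= i < n) f i.
  by move=> f; rewrite -!big_cat_nat //; lia.
rewrite !E.
rewrite (@sum_const 0 _ (gxy n m) 2); last first.
  by move=> i /andP[_ Hi]; case: (gvalP (bulkP1 HH Hi)).
rewrite (@sum_const 0 _ (gyx n m) 0); last first.
  by move=> i /andP[_ Hi]; case: (gvalP (bulkP1 HH Hi)).
rewrite (@sum_const (m %/ 2 + 6) _ (gxy n m) 0); last first.
  by move=> i Hi; case: (gvalM (bulkM HH Hi)).
rewrite (@sum_const (m %/ 2 + 6) _ (gyx n m) 2); last first.
  by move=> i Hi; case: (gvalM (bulkM HH Hi)).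
rewrite (@sum_const ((n + m) %/ 2 + 6) _ (gxy n m) 2); last first.
  by move=> i Hi; case: (gvalP (bulkP2 HH Hi)).
rewrite (@sum_const ((n + m) %/ 2 + 6) _ (gyx n m) 0); last first.
  by move=> i Hi; case: (gvalP (bulkP2 HH Hi)).
case: (W1_all HH Hm) => x1 [y1 [[-> ->] C1]].
case: (W2_all HH) => [[Hp [-> ->]]|[Hp [-> ->]]]; lia.
Qed.



Lemma diam_ex n l : l < diam (GPadj n 3) -> exists x y : GPV n, l < gdist (GPadj n 3) x y.
Proof.
move=> H.
case: (boolP [exists x, [exists y, l < gdist (GPadj n 3) x y]]) => [/existsP[x /existsP[y Hxy]]|Hne].
  by exists x, y.
exfalso; move: H; rewrite ltnNge => /negP; apply.
apply/bigmax_leqP => x _; apply/bigmax_leqP => y _.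
move: Hne; rewrite negb_exists => /forallP/(_ x); rewrite negb_exists => /forallP/(_ y).
by rewrite -leqNgt.
Qed.

Definition mm l := if l <= 4 then 3 * l - 3 else 3 * l - 7.

Lemma arith_main n l a b k : 16 < n -> 3 <= l -> k < n -> l < dl n a b k ->
  6 * l <= n + 14 /\ dl n false true (mm l) = l /\ mm l < n.
Proof.
move=> Hn Hl Hk; rewrite /mm; case: ifP => Hl4; case: a; case: b; unF => /= H; lia.
Qed.

Lemma small_cases n l : 17 <= n <= 23 -> 3 <= l -> 6 * l <= n + 14 ->
  \sum_(0 <= i < n) gxy n (mm l) i < \sum_(0 <= i < n) gyx n (mm l) i.
Proof.
move=> /andP[Ha Hb] Hl He.
have : (n = 17 \/ n = 18 \/ n = 19 \/ n = 20 \/ n = 21 \/ n = 22 \/ n = 23) /\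
       (l = 3 \/ l = 4 \/ l = 5 \/ l = 6) by lia.
case=> [[->|[->|[->|[->|[->|[->|->]]]]]] [->|[->|[->|->]]]];
  (try by exfalso; lia); rewrite unlock; vm_compute; reflexivity.
Qed.

Unset Implicit Arguments.

Theorem proposition2p3 (n : nat) : 16 < n ->
  forall l : nat, 3 <= l -> l < diam (GPadj n 3) ->
    ~ dist_balanced (GPadj n 3) l.
Proof.
move=> Hn l Hl Hd Hdb.
have [x0 [y0 Hxy0]] := diam_ex Hd.
rewrite gdist_delta // /delta in Hxy0.
have Hk : (idx y0 + (n - idx x0)) %% n < n by rewrite ltn_mod; lia.
have [H6 [Hdl Hmn]] := arith_main Hn Hl Hk Hxy0.
have H0 : 0 < n by lia.
pose x : GPV n := inl (Ordinal H0); pose y : GPV n := inr (Ordinal Hmn).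
have Hxy : gdist (GPadj n 3) x y = l.
  rewrite gdist_delta // /delta /= subn0 modnDr modn_small //.
have := Hdb x y Hxy.
case: (card_W Hn H0 Hmn) => -> -> Heq.
have : \sum_(0 <= i < n) gxy n (mm l) i < \sum_(0 <= i < n) gyx n (mm l) i.
  case: (leqP n 23) => Hn23.
  - apply: small_cases => //; lia.
  - apply: count_main.
    + rewrite /Hyp /mm; case: ifP => ?; split; lia.
    + rewrite /mm; case: ifP => ?; lia.
by rewrite Heq ltnn.
Qed.
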